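(* Let $\Omega=\{1,\ldots,n\}$, $k\in\Omega$, and let $\phi$ be a generalized metric satisfying convexity: for all distributions $p_1,p_2,q_1,q_2$ on a common finite set and $\lambda\in[0,1]$, $\phi(\lambda p_1+(1-\lambda)p_2\|\lambda q_1+(1-\lambda)q_2)\le\lambda\phi(p_1\|q_1)+(1-\lambda)\phi(p_2\|q_2)$. Then for all $\Omega$-point distributions $p_1,p_2,q_1,q_2$ and $\lambda\in[0,1]$, $\widehat{\phi}_k(\lambda p_1+(1-\lambda)p_2\|\lambda q_1+(1-\lambda)q_2)\le\lambda\widehat{\phi}_k(p_1\|q_1)+(1-\lambda)\widehat{\phi}_k(p_2\|q_2)$.
   Context: An $\Omega$-point distribution is a probability vector on $\Omega$. $\phi$ assigns a real number $\phi(p\|q)$ to each pair of probability distributions on the same finite set. $\mathcal P_k(\Omega)$ is the set of partitions of $\Omega$ into exactly $k$ nonempty disjoint cells; for $\rho\in\mathcal P_k(\Omega)$, $\widehat p_\rho(a)=\sum_{i\in a}p(i)$ for $a\in\rho$. The Sketch $\star$-metric is $\widehat{\phi}_k(p\|q)=\max_{\rho\in\mathcal P_k(\Omega)}\phi(\widehat p_\rho\|\widehat q_\rho)$. *)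

(* Defs.v *)
From mathcomp Require Import all_boot all_order all_algebra.
From mathcomp Require Import reals.
Set Implicit Arguments. Unset Strict Implicit. Unset Printing Implicit Defensive.
Import Order.TTheory GRing.Theory Num.Theory.
Local Open Scope ring_scope.

Section Defs.
Variable R : realType.

Definition is_dist (T : finType) (p : T -> R) : Prop :=
  (forall x, 0 <= p x) /\ \sum_(x : T) p x = 1.

Definition mix (T : finType) (l : R) (p1 p2 : T -> R) : T -> R :=
  fun x => l * p1 x + (1 - l) * p2 x.

(** a "generalized metric": a real number phi T p q for each pair of
    distributions p q on a common finite set T (values on non-distributions
    are irrelevant). *)
Definition gen_metric := forall T : finType, (T -> R) -> (T -> R) -> R.

Definition convex_metric (phi : gen_metric) : Prop :=
  forall (T : finType) (p1 p2 q1 q2 : T -> R) (l : R),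
    is_dist p1 -> is_dist p2 -> is_dist q1 -> is_dist q2 ->
    0 <= l <= 1 ->
    phi T (mix l p1 p2) (mix l q1 q2) <= l * phi T p1 q1 + (1 - l) * phi T p2 q2.

Definition partitions_k (n k : nat) : {set {set {set 'I_n}}} :=
  [set rho : {set {set 'I_n}} | partition rho [set: 'I_n] && (#|rho| == k)].

Definition cell (n : nat) (rho : {set {set 'I_n}}) : finType :=
  {A : {set 'I_n} | A \in rho}.

Definition coarse (n : nat) (rho : {set {set 'I_n}}) (p : 'I_n -> R) :
  cell rho -> R := fun a => \sum_(i in val a) p i.

Definition sketch (phi : gen_metric) (n k : nat) (p q : 'I_n -> R) : R :=
  let s := [seq phi (@cell n rho) (@coarse n rho p) (@coarse n rho q)
           | rho <- enum (partitions_k n k)] in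
  \big[Num.max/head 0 s]_(x <- s) x.

End Defs.

(* Main.v *)
Require Import Defs.
From mathcomp Require Import all_boot all_order all_algebra.
From mathcomp Require Import reals.
From Stdlib Require Import FunctionalExtensionality.
Import Order.TTheory GRing.Theory Num.Theory.
Local Open Scope ring_scope.

Lemma bigmax_le_aux (R : realType) (x0 c : R) (s : seq R) :
  x0 <= c -> all (fun x => x <= c) s -> \big[Num.max/x0]_(x <- s) x <= c.
Proof.
move=> h0; elim: s => [|a s IH] /=; first by rewrite big_nil.
by move=> /andP[ha hs]; rewrite big_cons ge_max ha IH.
Qed.

Lemma le_bigmax_aux (R : realType) (x0 : R) (s : seq R) x :
  x \in s -> x <= \big[Num.max/x0]_(y <- s) y.
Proof.
elim: s => [|a s IH] //=.
rewrite inE big_cons => /orP[/eqP->|hx]; first by rewrite le_max lexx.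
by rewrite le_max IH ?orbT.
Qed.

Lemma coarse_dist (R : realType) n (rho : {set {set 'I_n}}) (p : 'I_n -> R) :
  partition rho [set: 'I_n] -> is_dist p -> is_dist (@coarse R n rho p).
Proof.
move=> /and3P[/eqP hcov htriv _] [hp hs]; split.
  by move=> a; apply: sumr_ge0 => i _; apply: hp.
rewrite /coarse.
rewrite -(big_sub (fun A => A \in rho) (fun A : {set 'I_n} => \sum_(i in A) p i)).
rewrite -(big_trivIset _ htriv) hcov.
rewrite -hs; apply: eq_bigl => i; by rewrite in_setT.
Qed.

Lemma coarse_mix (R : realType) n (rho : {set {set 'I_n}}) (l : R) (p1 p2 : 'I_n -> R) :
  @coarse R n rho (mix l p1 p2) = mix l (@coarse R n rho p1) (@coarse R n rho p2).
Proof.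
apply: functional_extensionality => a.
by rewrite /coarse /mix big_split /= -!mulr_sumr.
Qed.

Theorem lemma6 (R : realType) (phi : gen_metric R) (n k : nat) :
  (1 <= k <= n)%N ->
  convex_metric phi ->
  forall (p1 p2 q1 q2 : 'I_n -> R) (l : R),
    is_dist p1 -> is_dist p2 -> is_dist q1 -> is_dist q2 ->
    0 <= l <= 1 ->
    sketch phi k (mix l p1 p2) (mix l q1 q2)
      <= l * sketch phi k p1 q1 + (1 - l) * sketch phi k p2 q2.
Proof.
move=> _ hconv p1 p2 q1 q2 l hp1 hp2 hq1 hq2 hl.
have hl0 : 0 <= l by case/andP: hl.
have hl1 : 0 <= 1 - l by case/andP: hl => _ h; rewrite subr_ge0.
rewrite /sketch.
have hmem : forall rho, rho \in enum (partitions_k n k) -> partition rho [set: 'I_n].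
  by move=> rho; rewrite mem_enum inE => /andP[].
move: hmem.
case: (enum (partitions_k n k)) => [|r0 rs] hmem.
  by rewrite /= !big_nil !mulr0 addr0.
set F := fun (p q : 'I_n -> R) rho => phi (@cell n rho) (@coarse R n rho p) (@coarse R n rho q).
have key : forall rho, rho \in r0 :: rs ->
   F (mix l p1 p2) (mix l q1 q2) rho
     <= l * \big[Num.max/head 0 [seq F p1 q1 rho | rho <- r0 :: rs]]_(x <- [seq F p1 q1 rho | rho <- r0 :: rs]) x
      + (1 - l) * \big[Num.max/head 0 [seq F p2 q2 rho | rho <- r0 :: rs]]_(x <- [seq F p2 q2 rho | rho <- r0 :: rs]) x.
  move=> rho hr; have hpart := hmem _ hr.
  rewrite /F !coarse_mix.
  have := hconv _ _ _ _ _ _ (@coarse_dist R n rho _ hpart hp1) (@coarse_dist R n rho _ hpart hp2)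
     (@coarse_dist R n rho _ hpart hq1) (@coarse_dist R n rho _ hpart hq2) hl.
  move=> h; apply: (le_trans h).
  apply: lerD; apply: ler_wpM2l => //; apply: le_bigmax_aux;
    by apply: map_f.
apply: bigmax_le_aux.
  by apply: key; rewrite mem_head.
by apply/allP => x /mapP[rho hr ->]; apply: key.
Qed.
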